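(* Let $A \subset \mathbb{Z}^d$ be a finite set whose convex hull is a $d$-dimensional simplex with vertices $v_1, \ldots, v_{d+1}$, where $v_{d+1} = 0$. For $v \in \mathbb{Z}^d$ write $\widetilde{v} = (v,1)$. Let $\mathcal{C}_A = \{\sum_{a \in A} n_a \widetilde{a} : n_a \in \mathbb{N}\}$ and $\Lambda = \mathrm{span}_{\mathbb{Z}}\{\widetilde{v}_1, \ldots, \widetilde{v}_{d+1}\}$. For each $i$, let $\mathcal{C}_i = \{\sum_{a \in A} n_a (a - v_i, 1) : n_a \in \mathbb{N}\}$ and $\Lambda_i = \mathrm{span}_{\mathbb{Z}}\{(v_j - v_i, 1) : 1 \leq j \leq d+1\}$. Fix $\pi \in \mathbb{Z}^{d+1}$, let $\mathcal{S}_\pi$ be the set of points of $\mathcal{C}_A$ congruent to $\pi$ modulo $\Lambda$, and for each $i$ and $\rho \in \mathbb{Z}^{d+1}$ let $\mathcal{S}_{\rho,i}$ be the set of points of $\mathcal{C}_i$ congruent to $\rho$ modulo $\Lambda_i$. A point $(g,H) \in \mathcal{S}_\pi$ is a minimal element of $\mathcal{S}_\pi$ if $(g,H) - \widetilde{v}_j \notin \mathcal{C}_A$ for all $j$; a point $(g,H) \in \mathcal{S}_{\rho,i}$ is a minimal element of $\mathcal{S}_{\rho,i}$ if $(g,H) - (v_j - v_i, 1) \notin \mathcal{C}_i$ for all $j$. Suppose the minimal elements of $\mathcal{S}_\pi$ are $(g_1,H_1), \ldots, (g_n,H_n)$. Then for any $1 \leq i \leq d$, the set $\mathcal{S}_{\pi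 - \widetilde{v}_i, i}$ has exactly $n$ minimal elements, and they can be enumerated as $(g^1, H^1), \ldots, (g^n, H^n)$ with \[ g^j = g_j - H_j v_i \quad \text{and} \quad H^j = H_j \qquad \text{for all } j \leq n. \]
   Context: $\mathbb{N} = \{0,1,2,\ldots\}$; points of $\mathbb{Z}^{d+1}$ are written $(g,H)$ with $g \in \mathbb{Z}^d$, $H \in \mathbb{Z}$. *)

(* Defs.v *)
From mathcomp Require Import all_boot all_order all_algebra.
Set Implicit Arguments. Unset Strict Implicit. Unset Printing Implicit Defensive.
Import Order.TTheory GRing.Theory Num.Theory.
Local Open Scope ring_scope.

Definition pt (d : nat) := ('rV[int]_d * int)%type.

Definition tl (d : nat) (v : 'rV[int]_d) : pt d := (v, 1).

Definition in_cone (d : nat) (gs : seq (pt d)) (p : pt d) : Prop :=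
  exists n : 'I_(size gs) -> nat, p = \sum_(k < size gs) (gs`_k *+ n k).

Definition in_lattice (d : nat) (gs : seq (pt d)) (p : pt d) : Prop :=
  exists z : 'I_(size gs) -> int, p = \sum_(k < size gs) (gs`_k *~ z k).

Definition toQ (d : nat) (v : 'rV[int]_d) : 'rV[rat]_d := map_mx (fun z : int => z%:~R) v.

Definition in_conv (d : nat) (S : seq 'rV[int]_d) (x : 'rV[rat]_d) : Prop :=
  exists c : 'I_(size S) -> rat,
    (forall k, 0 <= c k) /\ \sum_(k < size S) c k = 1 /\
    x = \sum_(k < size S) c k *: toQ S`_k.

Definition aff_indep (d : nat) (v : 'I_d.+1 -> 'rV[int]_d) : Prop :=
  forall c : 'I_d.+1 -> rat,
    \sum_j c j *: toQ (v j) = 0 -> \sum_j c j = 0 -> forall j, c j = 0.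

Definition simplex_hull (d : nat) (A : seq 'rV[int]_d) (v : 'I_d.+1 -> 'rV[int]_d) : Prop :=
  aff_indep v /\
  (forall x, in_conv A x <-> in_conv [seq v j | j <- enum 'I_d.+1] x).

Definition CA (d : nat) (A : seq 'rV[int]_d) : seq (pt d) := [seq tl a | a <- A].
Definition LamA (d : nat) (v : 'I_d.+1 -> 'rV[int]_d) : seq (pt d) :=
  [seq tl (v j) | j <- enum 'I_d.+1].
Definition Ci (d : nat) (A : seq 'rV[int]_d) (v : 'I_d.+1 -> 'rV[int]_d) (i : 'I_d.+1)
  : seq (pt d) := [seq (a - v i, 1) | a <- A].
Definition Lami (d : nat) (v : 'I_d.+1 -> 'rV[int]_d) (i : 'I_d.+1) : seq (pt d) :=
  [seq (v j - v i, 1) | j <- enum 'I_d.+1].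

Definition minimal_S (d : nat) (A : seq 'rV[int]_d) (v : 'I_d.+1 -> 'rV[int]_d)
  (pi p : pt d) : Prop :=
  [/\ in_cone (CA A) p, in_lattice (LamA v) (p - pi)
    & forall j, ~ in_cone (CA A) (p - tl (v j))].

Definition minimal_Si (d : nat) (A : seq 'rV[int]_d) (v : 'I_d.+1 -> 'rV[int]_d)
  (i : 'I_d.+1) (rho p : pt d) : Prop :=
  [/\ in_cone (Ci A v i) p, in_lattice (Lami v i) (p - rho)
    & forall j, ~ in_cone (Ci A v i) (p - (v j - v i, 1))].

(* Main.v *)
Require Import Defs.
From HB Require Import structures.
From mathcomp Require Import all_boot all_order all_algebra.
Import Order.TTheory GRing.Theory Num.Theory.
Local Open Scope ring_scope.

Section Aux.
Variable (d : nat) (w : 'rV[int]_d).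

Definition Tf (p : pt d) : pt d := (p.1 - p.2 *: w, p.2).
Definition Tg (p : pt d) : pt d := (p.1 + p.2 *: w, p.2).

Lemma TfK : cancel Tf Tg.
Proof. by case=> a b; rewrite /Tf /Tg /= subrK. Qed.
Lemma TgK : cancel Tg Tf.
Proof. by case=> a b; rewrite /Tf /Tg /= addrK. Qed.

Lemma Tf_is_zmod_morphism : zmod_morphism Tf.
Proof.
case=> a b [c e]; rewrite /Tf /=.
congr (_, _). rewrite scalerBl opprB.
simpl. by rewrite opprB addrACA [in RHS]addrACA [- c + _]addrC.
Qed.

HB.instance Definition _ := GRing.isZmodMorphism.Build (pt d) (pt d) Tf
  Tf_is_zmod_morphism.

End Aux.

Section Cone.
Lemma pairB d (a c : 'rV[int]_d) (b e : int) : ((a, b) - (c, e) : pt d) = (a - c, b - e).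
Proof. by []. Qed.
Lemma pairMn d (a : 'rV[int]_d) (b : int) n : ((a, b) *+ n : pt d) = (a *+ n, b *+ n).
Proof. elim: n => // n IH; by rewrite !mulrS IH. Qed.
Lemma pairMz d (a : 'rV[int]_d) (b : int) n : ((a, b) *~ n : pt d) = (a *~ n, b *~ n).
Proof. case: n => n; first exact: pairMn.
by rewrite !NegzE !mulrNz /intmul pairMn. Qed.

Variable (d : nat).

Lemma cone_nat (gs : seq (pt d)) p :
  in_cone gs p <-> exists n : nat -> nat, p = \sum_(0 <= k < size gs) gs`_k *+ n k.
Proof.
split.
  case=> n ->; exists (fun k => odflt 0%N (omap n (insub k))).
  rewrite big_mkord; apply: eq_bigr => k _; by rewrite valK.
case=> n ->; exists (fun k => n (val k)); by rewrite big_mkord.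
Qed.

Lemma lat_nat (gs : seq (pt d)) p :
  in_lattice gs p <-> exists z : nat -> int, p = \sum_(0 <= k < size gs) gs`_k *~ z k.
Proof.
split.
  case=> n ->; exists (fun k => odflt 0 (omap n (insub k))).
  rewrite big_mkord; apply: eq_bigr => k _; by rewrite valK.
case=> n ->; exists (fun k => n (val k)); by rewrite big_mkord.
Qed.

Lemma nth_mapT (f : {additive pt d -> pt d}) (gs : seq (pt d)) k :
  (map f gs)`_k = f gs`_k.
Proof.
case: (ltnP k (size gs)) => h; first by rewrite (nth_map 0).
by rewrite !nth_default ?size_map // raddf0.
Qed.

Lemma cone_map (f : {additive pt d -> pt d}) (fi : injective f) gs p :
  in_cone (map f gs) (f p) <-> in_cone gs p.
Proof.
split=> /cone_nat [n H]; apply/cone_nat; rewrite ?size_map; exists n.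
  apply: fi; rewrite H raddf_sum size_map; apply: eq_bigr => k _.
  by rewrite nth_mapT raddfMn.
rewrite H raddf_sum; apply: eq_bigr => k _.
by rewrite nth_mapT raddfMn.
Qed.

Lemma lat_map (f : {additive pt d -> pt d}) (fi : injective f) gs p :
  in_lattice (map f gs) (f p) <-> in_lattice gs p.
Proof.
split=> /lat_nat [n H]; apply/lat_nat; rewrite ?size_map; exists n.
  apply: fi; rewrite H raddf_sum size_map; apply: eq_bigr => k _.
  by rewrite nth_mapT raddfMz.
rewrite H raddf_sum; apply: eq_bigr => k _.
by rewrite nth_mapT raddfMz.
Qed.

Lemma latD (gs : seq (pt d)) p q : in_lattice gs p -> in_lattice gs q -> in_lattice gs (p + q).
Proof.
move=> /lat_nat [z1 ->] /lat_nat [z2 ->]; apply/lat_nat; exists (fun k => z1 k + z2 k).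
by rewrite -big_split; apply: eq_bigr => k _; rewrite mulrzDr.
Qed.

Lemma latZ (gs : seq (pt d)) p c : in_lattice gs p -> in_lattice gs (p *~ c).
Proof.
move=> /lat_nat [z1 ->]; apply/lat_nat; exists (fun k => z1 k * c).
by rewrite mulrz_suml; apply: eq_bigr => k _; rewrite mulrzA.
Qed.

Lemma latN (gs : seq (pt d)) p : in_lattice gs p -> in_lattice gs (- p).
Proof. by move=> h; rewrite -mulrN1z; apply: latZ. Qed.

Lemma latB (gs : seq (pt d)) p q : in_lattice gs p -> in_lattice gs q -> in_lattice gs (p - q).
Proof. by move=> hp hq; apply: latD => //; apply: latN. Qed.

Lemma lat_mem (gs : seq (pt d)) x : x \in gs -> in_lattice gs x.
Proof.
move=> xs; apply/lat_nat; exists (fun k => (k == index x gs)%:Z).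
rewrite (bigD1_seq (index x gs)) ?iota_uniq //=; last first.
  by rewrite mem_index_iota index_mem.
rewrite eqxx mulr1z nth_index // big1 ?addr0 // => k /negbTE ->.
by rewrite mulr0z.
Qed.

End Cone.
Arguments Tf {d}. Arguments Tg {d}. Arguments TfK {d}. Arguments TgK {d}.
Arguments cone_nat {d}. Arguments lat_nat {d}. Arguments cone_map {d}.
Arguments lat_map {d}. Arguments latD {d}. Arguments latZ {d}.
Arguments latN {d}. Arguments latB {d}. Arguments lat_mem {d}.

Theorem lemma4p2 (d : nat) (A : seq 'rV[int]_d) (v : 'I_d.+1 -> 'rV[int]_d)
  (pi : pt d) (s : seq (pt d)) :
  simplex_hull A v ->
  v ord_max = 0 ->
  uniq s ->
  (forall p, p \in s <-> minimal_S A v pi p) ->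
  forall i : 'I_d.+1, i != ord_max ->
    let s' := [seq (p.1 - p.2 *: v i, p.2) | p <- s] in
    uniq s' /\
    (forall p, p \in s' <-> minimal_Si A v i (pi - tl (v i)) p).
Proof.
move=> _ v0 us hs i _ s'.
have Tinj : injective (Tf (v i)) := can_inj (@TfK _ _).
have es' : s' = map (Tf (v i)) s by [].
have eCi : Ci A v i = map (Tf (v i)) (CA A).
  by rewrite /Ci /CA -map_comp; apply: eq_map => a /=; rewrite /Tf /= scale1r.
have eLi : Lami v i = map (Tf (v i)) (LamA v).
  by rewrite /Lami /LamA -map_comp; apply: eq_map => a /=; rewrite /Tf /= scale1r.
have eT j : (v j - v i, 1) = (Tf (v i)) (tl (v j)) by rewrite /Tf /= scale1r.
have memL j : in_lattice (LamA v) (tl (v j)).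
  by apply: lat_mem; apply: map_f; rewrite mem_enum.
have key : in_lattice (LamA v) (Tg (v i) (pi - tl (v i)) - pi).
  have -> : Tg (v i) (pi - tl (v i)) - pi =
      (tl (v i) - tl (v ord_max)) *~ (pi.2 - 2) - tl (v ord_max).
    rewrite v0 /Tg /tl /= pairMz !pairB /=.
    congr (_, _).
      rewrite !subr0 addrAC [pi.1 - v i]addrC addrK -scaler_int intz.
      have -> : pi.2 - 2 = (pi.2 - 1) - 1 by rewrite -addrA.
      by rewrite [RHS]scalerBl scale1r addrC.
    by rewrite [1 - 1]subrr mul0rz addrAC subrr.
  apply: latB => //; apply: latZ; apply: latB => //.
split; first by rewrite es' map_inj_uniq.
move=> p; rewrite -[p](TgK (v i)) es' mem_map //.
set q := Tg (v i) p.
suff e : minimal_S A v pi q <-> minimal_Si A v i (pi - tl (v i)) ((Tf (v i)) q).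
  by split => [/hs/e | /e/hs].
rewrite /minimal_S /minimal_Si eCi eLi.
have -> : (Tf (v i)) q - (pi - tl (v i)) = (Tf (v i)) (q - Tg (v i) (pi - tl (v i))).
  by rewrite [RHS]raddfB; congr (_ - _); symmetry; apply: TgK.
have lq : in_lattice (LamA v) (q - pi) <->
          in_lattice (LamA v) (q - Tg (v i) (pi - tl (v i))).
  split=> h.
    have -> : q - Tg (v i) (pi - tl (v i)) = (q - pi) - (Tg (v i) (pi - tl (v i)) - pi).
      by rewrite opprB addrA subrK.
    by apply: latB.
  have -> : q - pi = (q - Tg (v i) (pi - tl (v i))) + (Tg (v i) (pi - tl (v i)) - pi).
    by rewrite addrA subrK.
  by apply: latD.
split; case=> h1 h2 h3; split.
- by apply/(cone_map _ Tinj).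
- by apply/(lat_map _ Tinj); apply/lq.
- by move=> j; rewrite eT -raddfB => /(cone_map _ Tinj); apply: h3.
- by move: h1 => /(cone_map (Tf (v i)) Tinj).
- by apply/lq; apply/(lat_map _ Tinj).
- by move=> j hj; apply: (h3 j); rewrite eT -raddfB; apply/(cone_map _ Tinj).
Qed.
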